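(* Let $\mathcal K$ be a quantum channel on $n\times n$ matrices described by Kraus operators $K_1,\dots,K_d\in\mathbb C^{n\times n}$ (with $\mathcal K(\rho)=\sum_j K_j\rho K_j^\dagger$, $\sum_j K_j^\dagger K_j=I_n$) such that $K_1=\alpha I_n$ for some $\alpha\in\mathbb C$ and $\mathrm{Tr}(K_j)=0$ for $j=2,\dots,d$. Then $\lVert\mathcal K\rVert=\cos^{-1}\lvert\alpha\rvert$, with $\cos^{-1}$ taking values in $[0,\pi]$.
   Context: For a unitary matrix $U$ of size $r$ with eigenvalues $e^{i\theta_j}$, $\theta_j\in(-\pi,\pi]$, its time-energy cost is $\lVert U\rVert=\max_{1\le j\le r}|\theta_j|$. For a quantum channel $\mathcal K$ acting on an $n$-dimensional system $A$, its time-energy cost is $\lVert\mathcal K\rVert=\inf_U\lVert U\rVert$, where the infimum is over all finite-dimensional ancilla systems $B$ with a fixed standard state $|0\rangle_B$ and all unitaries $U_{BA}$ on $B\otimes A$ such that $\mathcal K(\rho)=\mathrm{Tr}_B[U_{BA}(|0\rangle_B\langle 0|\otimes\rho_A)U_{BA}^\dagger]$ for all density matrices $\rho$ on $A$. *)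

(* Defs.v *)
From HB Require Import structures.
From mathcomp Require Import all_boot all_order all_algebra.
From mathcomp Require Import all_classical all_reals.
From mathcomp Require Import trigo.
From mathcomp Require Import complex mxtens.
Set Implicit Arguments. Unset Strict Implicit. Unset Printing Implicit Defensive.
Import Order.TTheory GRing.Theory Num.Theory.
Local Open Scope ring_scope.
Local Open Scope complex_scope.

Definition adj {R : realType} {m p : nat} (A : 'M[R[i]]_(m, p)) : 'M[R[i]]_(p, m) :=
  (map_mx (fun z : R[i] => z^*) A)^T.

Definition unitary {R : realType} {r : nat} (U : 'M[R[i]]_r) : Prop :=
  adj U *m U = 1%:M /\ U *m adj U = 1%:M.

Definition expi {R : realType} (t : R) : R[i] := (cos t) +i* (sin t).

Definition unitary_cost {R : realType} {r : nat} (U : 'M[R[i]]_r) : R :=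
  sup [set `|t| | t in [set t : R | - pi < t <= pi /\ eigenvalue U (expi t)]]%classic.

Definition psd {R : realType} {n : nat} (rho : 'M[R[i]]_n) : Prop :=
  forall v : 'cV[R[i]]_n, 0 <= (adj v *m rho *m v) 0 0.

Definition density {R : realType} {n : nat} (rho : 'M[R[i]]_n) : Prop :=
  psd rho /\ \tr rho = 1.

(* partial trace over the first tensor factor B of B (x) A *)
Definition ptraceB {R : realType} {m n : nat} (X : 'M[R[i]]_(m * n)) : 'M[R[i]]_n :=
  \matrix_(a, a') \sum_(b < m) X (mxtens_index (b, a)) (mxtens_index (b, a')).

(* U_{BA} implements the channel Phi with ancilla B of dimension m.+1 and
   standard state |0>_B *)
Definition implements {R : realType} {n m : nat}
  (Phi : 'M[R[i]]_n -> 'M[R[i]]_n) (U : 'M[R[i]]_(m.+1 * n)) : Prop :=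
  unitary U /\
  forall rho : 'M[R[i]]_n, density rho ->
    Phi rho = ptraceB (U *m ((delta_mx 0 0 : 'M[R[i]]_m.+1) *t rho) *m adj U).

Definition channel_cost {R : realType} {n : nat} (Phi : 'M[R[i]]_n -> 'M[R[i]]_n) : R :=
  inf [set c : R | exists (m : nat) (U : 'M[R[i]]_(m.+1 * n)),
                      implements Phi U /\ c = unitary_cost U]%classic.

Definition kraus_channel {R : realType} {n d : nat} (K : 'I_d -> 'M[R[i]]_n)
  (rho : 'M[R[i]]_n) : 'M[R[i]]_n :=
  \sum_(j < d) K j *m rho *m adj (K j).

(* Main.v *)
Require Import Defs.
From HB Require Import structures.
From mathcomp Require Import all_boot all_order all_algebra.
From mathcomp Require Import all_classical all_reals.
From mathcomp Require Import trigo.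
From mathcomp Require Import complex mxtens.
From mathcomp Require Import spectral.
From mathcomp Require Import ring lra.
Set Implicit Arguments. Unset Strict Implicit. Unset Printing Implicit Defensive.
Import Order.TTheory GRing.Theory Num.Theory.
Local Open Scope ring_scope.

Section Alg.
Variables (F : fieldType) (A : algType F).
Variables (P T Ts : A) (s2 : F).
Hypotheses (hPP : P * P = P) (hTsT : Ts * T = s2 *: P) (hPT : P * T = 0)
  (hTP : T * P = T) (hTsP : Ts * P = 0) (hPTs : P * Ts = Ts).

Let G := T * Ts.

Lemma hTT : T * T = 0. Proof. by rewrite -{1}hTP -mulrA hPT mulr0. Qed.
Lemma hTsTs : Ts * Ts = 0. Proof. by rewrite -{2}hPTs mulrA hTsP mul0r. Qed.
Lemma hPG : P * G = 0. Proof. by rewrite /G mulrA hPT mul0r. Qed.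
Lemma hGP : G * P = 0. Proof. by rewrite /G -mulrA hTsP mulr0. Qed.
Lemma hGT : G * T = s2 *: T. Proof. by rewrite /G -mulrA hTsT -scalerAr hTP. Qed.
Lemma hTsG : Ts * G = s2 *: Ts. Proof. by rewrite /G mulrA hTsT -scalerAl hPTs. Qed.
Lemma hTG : T * G = 0. Proof. by rewrite /G mulrA hTT mul0r. Qed.
Lemma hGTs : G * Ts = 0. Proof. by rewrite /G -mulrA hTsTs mulr0. Qed.
Lemma hGG : G * G = s2 *: G. Proof. by rewrite {1}/G -mulrA hTsG -scalerAr. Qed.

Definition e (i : nat) : A :=
  match i with 0 => 1 | 1 => P | 2 => G | 3 => T | _ => Ts end.

Definition tv (i j k : nat) : F :=
  match i, j with
  | 0, _ => (j == k)%:R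
  | _, 0 => (i == k)%:R
  | 1, 1 => (k == 1)%:R | 1, 4 => (k == 4)%:R
  | 2, 2 => s2 * (k == 2)%:R | 2, 3 => s2 * (k == 3)%:R
  | 3, 1 => (k == 3)%:R | 3, 4 => (k == 2)%:R
  | 4, 2 => s2 * (k == 4)%:R | 4, 3 => s2 * (k == 1)%:R
  | _, _ => 0
  end.

Definition lc (x : nat -> F) : A := \sum_(0 <= i < 5) x i *: e i.
Definition mulv (x y : nat -> F) (k : nat) : F :=
  \sum_(0 <= i < 5) \sum_(0 <= j < 5) x i * y j * tv i j k.

Lemma lc5 x : lc x = x 0%N *: 1 + x 1%N *: P + x 2%N *: G + x 3%N *: T + x 4%N *: Ts.
Proof. by rewrite /lc /index_iota /= !big_cons big_nil addr0 !addrA. Qed.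

Lemma table i j : (i < 5)%N -> (j < 5)%N -> e i * e j = \sum_(0 <= k < 5) tv i j k *: e k.
Proof.
rewrite /index_iota /= => hi hj; rewrite !big_cons big_nil.
case: i hi => [|[|[|[|[|i]]]]] hi //; case: j hj => [|[|[|[|[|j]]]]] hj //;
rewrite /tv /e /= ?mulr1n ?mulr0n ?mulr1 ?mulr0 ?scale0r ?scale1r ?add0r ?addr0
  ?mul1r ?mulr1 ?hPP ?hPT ?hPTs ?hPG ?hGP ?hGT ?hGTs ?hGG ?hTP ?hTT ?hTG ?hTsP ?hTsT ?hTsTs ?hTsG //.
Qed.

Lemma lcM x y : lc x * lc y = lc (mulv x y).
Proof.
rewrite /lc /mulv mulr_suml.
transitivity (\sum_(0 <= i < 5) \sum_(0 <= j < 5) \sum_(0 <= k < 5)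
   (x i * y j * tv i j k) *: e k).
  apply: eq_big_nat => i /andP[_ hi]; rewrite mulr_sumr; apply: eq_big_nat => j /andP[_ hj].
  rewrite -scalerAl -scalerAr scalerA table //.
  by rewrite scaler_sumr; apply: eq_bigr => k _; rewrite scalerA.
under eq_bigr => i _ do rewrite exchange_big /=.
rewrite exchange_big /=; apply: eq_bigr => k _.
rewrite scaler_suml; apply: eq_bigr => i _; by rewrite scaler_suml.
Qed.

Definition wv (x0 x1 x2 x3 x4 : F) (i : nat) : F :=
  match i with 0 => x0 | 1 => x1 | 2 => x2 | 3 => x3 | _ => x4 end.

Lemma lc_ext x y : (forall k, (k < 5)%N -> x k = y k) -> lc x = lc y.
Proof. by move=> h; apply: eq_big_nat => k /andP[_ /h ->]. Qed.

Lemma lc_wv x0 x1 x2 x3 x4 :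
  lc (wv x0 x1 x2 x3 x4) = x0 *: 1 + x1 *: P + x2 *: G + x3 *: T + x4 *: Ts.
Proof. by rewrite lc5. Qed.

Variable c : F.
Hypothesis hc : 1 + c != 0.
Hypothesis hs2 : s2 = 1 - c ^+ 2.
Let a := 1 - c.
Let b := (1 + c)^-1.

Definition Wm : A := 1 - a *: P - b *: G + T - Ts.
Definition Wm' : A := 1 - a *: P - b *: G + Ts - T.

Lemma Wm_lc : Wm = lc (wv 1 (- a) (- b) 1 (-1)).
Proof. by rewrite lc_wv /Wm !scaleNr !scale1r. Qed.

Lemma Wm'_lc : Wm' = lc (wv 1 (- a) (- b) (-1) 1).
Proof. by rewrite lc_wv /Wm' !scaleNr !scale1r [RHS]addrAC. Qed.

Lemma one_lc : 1 = lc (wv 1 0 0 0 0) :> A.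
Proof. by rewrite lc_wv !scale0r !addr0 scale1r. Qed.


Lemma Wm'Wm : Wm' * Wm = 1.
Proof.
rewrite Wm_lc Wm'_lc lcM one_lc; apply: lc_ext.
move=> k hk; rewrite /mulv /index_iota /= !big_cons !big_nil /=.
case: k hk => [|[|[|[|[|k]]]]] hk //; rewrite /tv /wv /= /a /b ?hs2.
all: (field; exact: hc).
Qed.

Lemma WmWm' : Wm * Wm' = 1.
Proof.
rewrite Wm_lc Wm'_lc lcM one_lc; apply: lc_ext.
move=> k hk; rewrite /mulv /index_iota /= !big_cons !big_nil /=.
case: k hk => [|[|[|[|[|k]]]]] hk //; rewrite /tv /wv /= /a /b ?hs2.
all: (field; exact: hc).
Qed.

Lemma WmP : Wm * P = c *: P + T.
Proof.
have -> : P = lc (wv 0 1 0 0 0) by rewrite lc_wv !scale0r scale1r !addr0 add0r.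
have -> : c *: lc (wv 0 1 0 0 0) + T = lc (wv 0 c 0 1 0).
  by rewrite !lc_wv !scale0r scale1r !addr0 !add0r scale1r.
rewrite Wm_lc lcM; apply: lc_ext.
move=> k hk; rewrite /mulv /index_iota /= !big_cons !big_nil /=.
case: k hk => [|[|[|[|[|k]]]]] hk //; rewrite /tv /wv /= /a /b ?hs2.
all: (field; exact: hc).
Qed.

Lemma lcD x y : lc x + lc y = lc (fun k => x k + y k).
Proof. by rewrite /lc -big_split; apply: eq_bigr => i _; rewrite scalerDl. Qed.

Lemma lcZ k x : k *: lc x = lc (fun i => k * x i).
Proof. by rewrite /lc scaler_sumr; apply: eq_bigr => i _; rewrite scalerA. Qed.

Lemma lcN x : - lc x = lc (fun i => - x i).
Proof. by rewrite /lc -sumrN; apply: eq_bigr => i _; rewrite scaleNr. Qed.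

Lemma Wm_aux : (Wm - 1) * lc (wv a (- a) (- b) 0 0) = 0.
Proof.
have -> : (0 : A) = lc (wv 0 0 0 0 0) by rewrite lc_wv !scale0r !addr0.
rewrite Wm_lc one_lc lcN lcD lcM; apply: lc_ext.
move=> k hk; rewrite /mulv /index_iota /= !big_cons !big_nil /=.
case: k hk => [|[|[|[|[|k]]]]] hk //; rewrite /tv /wv /= /a /b ?hs2.
all: (field; exact: hc).
Qed.

Lemma Wm_sum : Wm + Wm' - (c *+ 2) *: 1 = 2%:R *: lc (wv a (- a) (- b) 0 0).
Proof.
rewrite Wm_lc Wm'_lc one_lc lcZ lcZ lcN !lcD; apply: lc_ext.
move=> k hk; case: k hk => [|[|[|[|[|k]]]]] hk //; rewrite /wv /= /a /b; ring.
Qed.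

Lemma Wm_poly : (Wm - 1) * (Wm * Wm - (c *+ 2) *: Wm + 1) = 0.
Proof.
have -> : Wm * Wm - (c *+ 2) *: Wm + 1 = (Wm + Wm' - (c *+ 2) *: 1) * Wm.
  rewrite [RHS]mulrBl [in RHS]mulrDl Wm'Wm -scalerAl mul1r.
  by rewrite addrAC.
by rewrite Wm_sum -scalerAl scalerAr mulrA Wm_aux mul0r.
Qed.

End Alg.

Local Open Scope complex_scope.

Section Basic.
Variable R : realType.
Local Notation C := R[i].

Lemma adjE m p (A : 'M[C]_(m, p)) i j : adj A i j = (A j i)^*.
Proof. by rewrite /adj !mxE. Qed.

Lemma adjK m p (A : 'M[C]_(m, p)) : adj (adj A) = A.
Proof. by apply/matrixP => i j; rewrite !adjE conjcK. Qed.

Lemma adjD m p (A B : 'M[C]_(m, p)) : adj (A + B) = adj A + adj B.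
Proof. by apply/matrixP => i j; rewrite !adjE !mxE rmorphD. Qed.

Lemma adjN m p (A : 'M[C]_(m, p)) : adj (- A) = - adj A.
Proof. by apply/matrixP => i j; rewrite !adjE !mxE rmorphN. Qed.

Lemma adjB m p (A B : 'M[C]_(m, p)) : adj (A - B) = adj A - adj B.
Proof. by rewrite adjD adjN. Qed.

Lemma adjZ m p a (A : 'M[C]_(m, p)) : adj (a *: A) = a^* *: adj A.
Proof. by apply/matrixP => i j; rewrite !adjE !mxE rmorphM. Qed.

Lemma adj0 m p : adj (0 : 'M[C]_(m, p)) = 0.
Proof. by apply/matrixP => i j; rewrite adjE !mxE conjc0. Qed.

Lemma adj_sum m p I (r : seq I) (P : pred I) (F : I -> 'M[C]_(m, p)) :
  adj (\sum_(i <- r | P i) F i) = \sum_(i <- r | P i) adj (F i).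
Proof.
by apply/matrixP => i j; rewrite adjE !summxE rmorph_sum; apply: eq_bigr => k _; rewrite adjE.
Qed.

Lemma adjM m p q (A : 'M[C]_(m, p)) (B : 'M[C]_(p, q)) :
  adj (A *m B) = adj B *m adj A.
Proof.
apply/matrixP => i j; rewrite adjE !mxE rmorph_sum; apply: eq_bigr => k _.
by rewrite !adjE rmorphM mulrC.
Qed.

Lemma adj_scalar m a : adj (a%:M : 'M[C]_m) = (a^*)%:M.
Proof. by apply/matrixP => i j; rewrite adjE !mxE eq_sym; case: eqP => _; rewrite ?mulr1n ?mulr0n ?conjc0. Qed.

Lemma adj1 m : adj (1%:M : 'M[C]_m) = 1%:M.
Proof. by rewrite adj_scalar rmorph1. Qed.

Lemma adj_delta m p (i : 'I_m) (j : 'I_p) : adj (delta_mx i j : 'M[C]_(m,p)) = delta_mx j i.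
Proof. by apply/matrixP => a b; rewrite adjE !mxE andbC; case: (_ && _); rewrite ?rmorph0 ?rmorph1. Qed.

Lemma adj_tens m p q r (A : 'M[C]_(m, p)) (B : 'M[C]_(q, r)) :
  adj (A *t B) = adj A *t adj B.
Proof.
apply/matrixP => i j.
case: (mxtens_unindex i) (mxtens_unindexK i) => i1 i2 <-.
case: (mxtens_unindex j) (mxtens_unindexK j) => j1 j2 <-.
by rewrite adjE !tensmxE !adjE rmorphM.
Qed.


Lemma sum_hot {T : nzRingType} m (k : 'I_m) (F : 'I_m -> T) :
  \sum_(r < m) F r * (r == k)%:R = F k.
Proof.
rewrite (bigD1 k) //= eqxx mulr1 big1 ?addr0 // => r /negbTE ->; by rewrite mulr0.
Qed.

Lemma sum_hotl {T : nzRingType} m (k : 'I_m) (F : 'I_m -> T) :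
  \sum_(r < m) (r == k)%:R * F r = F k.
Proof.
rewrite (bigD1 k) //= eqxx mul1r big1 ?addr0 // => r /negbTE ->; by rewrite mul0r.
Qed.

Lemma sum_tens {T : nzRingType} m n (F : 'I_(m * n) -> T) :
  \sum_(k < m * n) F k = \sum_(i < m) \sum_(j < n) F (mxtens_index (i, j)).
Proof.
rewrite pair_big /=.
rewrite (reindex (@mxtens_index m n)) /=; last first.
  by exists (@mxtens_unindex m n) => x _; rewrite ?mxtens_indexK ?mxtens_unindexK.
by apply: eq_bigr => -[i j].
Qed.

Ltac tidx i :=
  case: (mxtens_unindex i) (mxtens_unindexK i) => ? ? <-.

Section Tens.
Variables (m n p q : nat).
Implicit Types (A : 'M[C]_(m, n)) (B : 'M[C]_(p, q)).

Lemma tensmxDl A1 A2 B : (A1 + A2) *t B = A1 *t B + A2 *t B.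
Proof. apply/matrixP => i j; tidx i; tidx j; by rewrite tensmxE [in RHS]mxE !tensmxE !mxE mulrDl. Qed.

Lemma tensmxDr A B1 B2 : A *t (B1 + B2) = A *t B1 + A *t B2.
Proof. apply/matrixP => i j; tidx i; tidx j; by rewrite tensmxE [in RHS]mxE !tensmxE !mxE mulrDr. Qed.

Lemma tensmxZl a A B : (a *: A) *t B = a *: (A *t B).
Proof. apply/matrixP => i j; tidx i; tidx j; by rewrite tensmxE [in RHS]mxE !tensmxE !mxE mulrA. Qed.

Lemma tensmxZr a A B : A *t (a *: B) = a *: (A *t B).
Proof. apply/matrixP => i j; tidx i; tidx j; by rewrite tensmxE [in RHS]mxE !tensmxE !mxE mulrCA. Qed.

Lemma tensmx_suml I (r : seq I) (P : pred I) (F : I -> 'M[C]_(m, n)) B :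
  (\sum_(i <- r | P i) F i) *t B = \sum_(i <- r | P i) (F i *t B).
Proof.
apply: (big_ind2 (fun X Y => X *t B = Y)) => //; first by rewrite tens0mx.
by move=> ? ? ? ? <- <-; rewrite tensmxDl.
Qed.

Lemma tensmx_sumr I (r : seq I) (P : pred I) (F : I -> 'M[C]_(p, q)) A :
  A *t (\sum_(i <- r | P i) F i) = \sum_(i <- r | P i) (A *t F i).
Proof.
apply: (big_ind2 (fun X Y => A *t X = Y)) => //; first by rewrite tensmx0.
by move=> ? ? ? ? <- <-; rewrite tensmxDr.
Qed.
End Tens.

Lemma ptraceB_tens m n (A : 'M[C]_m) (B : 'M[C]_n) : ptraceB (A *t B) = \tr A *: B.
Proof.
apply/matrixP => a a'; rewrite !mxE /mxtrace mulr_suml; apply: eq_bigr => b _.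
by rewrite tensmxE.
Qed.

Lemma ptraceBD m n (X Y : 'M[C]_(m * n)) : ptraceB (X + Y) = ptraceB X + ptraceB Y.
Proof. by apply/matrixP => a a'; rewrite !mxE -big_split; apply: eq_bigr => b _; rewrite mxE. Qed.

Lemma ptraceB0 m n : ptraceB (0 : 'M[C]_(m * n)) = 0.
Proof. by apply/matrixP => a a'; rewrite !mxE big1 // => b _; rewrite mxE. Qed.

Lemma ptraceB_sum m n I (r : seq I) (P : pred I) (F : I -> 'M[C]_(m * n)) :
  ptraceB (\sum_(i <- r | P i) F i) = \sum_(i <- r | P i) ptraceB (F i).
Proof.
apply: (big_ind2 (fun X Y => ptraceB X = Y)) => //; first exact: ptraceB0.
by move=> ? ? ? ? <- <-; rewrite ptraceBD.
Qed.


Definition Pm m n : 'M[C]_(m.+1 * n) := (delta_mx 0 0 : 'M[C]_m.+1) *t (1%:M : 'M[C]_n).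
Definition Kp m n (X : 'M[C]_(m.+1 * n)) (b : 'I_m.+1) : 'M[C]_n :=
  \matrix_(a < n, x < n) X (mxtens_index (b, a)) (mxtens_index (ord0, x)).
Definition Vof m n (L : 'I_m.+1 -> 'M[C]_n) : 'M[C]_(m.+1 * n) :=
  \sum_b (delta_mx b 0 : 'M[C]_m.+1) *t L b.

Lemma tr_delta m (b c : 'I_m) : \tr (delta_mx b c : 'M[C]_m) = (b == c)%:R.
Proof.
rewrite /mxtrace (bigD1 b) //= mxE eqxx /= big1 ?addr0 // => i /negbTE ib.
by rewrite mxE ib.
Qed.

Lemma mulPm_tens m n (rho : 'M[C]_n) :
  Pm m n *m ((delta_mx 0 0 : 'M[C]_m.+1) *t rho) = (delta_mx 0 0 : 'M[C]_m.+1) *t rho.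
Proof. by rewrite /Pm tensmx_mul mul_delta_mx mul1mx. Qed.

Lemma mul_tensPm m n (rho : 'M[C]_n) :
  ((delta_mx 0 0 : 'M[C]_m.+1) *t rho) *m Pm m n = (delta_mx 0 0 : 'M[C]_m.+1) *t rho.
Proof. by rewrite /Pm tensmx_mul mul_delta_mx mulmx1. Qed.

Lemma adjPm m n : adj (Pm m n) = Pm m n.
Proof. by rewrite /Pm adj_tens adj_delta adj1. Qed.

Lemma mulPmV m n (X : 'M[C]_(m.+1 * n)) : X *m Pm m n = Vof (Kp X).
Proof.
apply/matrixP => i j.
case: (mxtens_unindex i) (mxtens_unindexK i) => b a <-.
case: (mxtens_unindex j) (mxtens_unindexK j) => c x <-.
rewrite /Vof summxE !mxE sum_tens.
under eq_bigr => r _ do under eq_bigr => s _ do rewrite /Pm tensmxE !mxE.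
under [RHS]eq_bigr => r _ do rewrite tensmxE !mxE.
case: (c =P 0) => [_|_].
  under eq_bigr => r _ do under eq_bigr => s _ do rewrite mulrA.
  under eq_bigr => r _ do rewrite sum_hot.
  under eq_bigr => r _ do rewrite andbT.
  rewrite sum_hot.
  by under [RHS]eq_bigr => r _ do rewrite andbT eq_sym; rewrite sum_hotl.
rewrite big1 ?[RHS]big1 // => r _; first by rewrite andbF mul0r.
by rewrite big1 // => s _; rewrite andbF mul0r mulr0.
Qed.


Lemma adj_Vof m n (L : 'I_m.+1 -> 'M[C]_n) :
  adj (Vof L) = \sum_b (delta_mx 0 b : 'M[C]_m.+1) *t adj (L b).
Proof. by rewrite /Vof adj_sum; apply: eq_bigr => b _; rewrite adj_tens adj_delta. Qed.

Lemma ptrace_Vof m n (L : 'I_m.+1 -> 'M[C]_n) (rho : 'M[C]_n) :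
  ptraceB (Vof L *m ((delta_mx 0 0 : 'M[C]_m.+1) *t rho) *m adj (Vof L)) =
  \sum_b L b *m rho *m adj (L b).
Proof.
rewrite adj_Vof /Vof mulmx_suml mulmx_suml ptraceB_sum.
apply: eq_bigr => b _.
rewrite tensmx_mul mul_delta_mx mulmx_sumr ptraceB_sum.
under eq_bigr => c _ do rewrite tensmx_mul mul_delta_mx ptraceB_tens tr_delta.
rewrite (bigD1 b) //= eqxx scale1r big1 ?addr0 // => c /negbTE.
by rewrite eq_sym => ->; rewrite scale0r.
Qed.

Lemma ptrace_Kp m n (X : 'M[C]_(m.+1 * n)) (rho : 'M[C]_n) :
  ptraceB (X *m ((delta_mx 0 0 : 'M[C]_m.+1) *t rho) *m adj X) =
  \sum_b Kp X b *m rho *m adj (Kp X b).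
Proof.
rewrite -ptrace_Vof -mulPmV adjM adjPm.
by rewrite -(mulmxA X (Pm m n)) mulPm_tens [in RHS]mulmxA -[in RHS](mulmxA X) mul_tensPm.
Qed.


Lemma sum_normsq_eq0 m (x : 'I_m -> C) :
  \sum_r x r * (x r)^* = 0 -> forall r, x r = 0.
Proof.
move=> /eqP; rewrite psumr_eq0 => [/allP h r|r _]; last exact: mulcJ_ge0.
have /h/implyP/(_ isT) : r \in index_enum 'I_m by rewrite mem_index_enum.
by rewrite mulf_eq0 conjc_eq0 orbb => /eqP.
Qed.

Lemma row_norm_neq0 m (v : 'rV[C]_m) : v != 0 -> (v *m adj v) 0 0 != 0.
Proof.
move=> vnz; apply/eqP => h; move/eqP: vnz; apply; apply/rowP => r.
rewrite mxE; apply: (sum_normsq_eq0 (x := fun r => v 0 r)).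
rewrite -[RHS]h mxE; apply: eq_bigr => i _; by rewrite adjE.
Qed.

Lemma col_norm_neq0 m (z : 'cV[C]_m) : z != 0 -> (adj z *m z) 0 0 != 0.
Proof.
move=> znz; apply/eqP => h; move/eqP: znz; apply; apply/colP => r.
rewrite mxE; apply: (sum_normsq_eq0 (x := fun r => z r 0)).
rewrite -[RHS]h mxE; apply: eq_bigr => i _; by rewrite adjE mulrC.
Qed.

Lemma col_norm_ge0 m (z : 'cV[C]_m) : 0 <= (adj z *m z) 0 0.
Proof. by rewrite mxE; apply: sumr_ge0 => i _; rewrite adjE mulrC mulcJ_ge0. Qed.

Lemma eig_unit N (U : 'M[C]_N) l : U *m adj U = 1%:M -> eigenvalue U l ->
  l * l^* = 1.
Proof.
move=> hU /eigenvalueP [v hv vnz].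
have : v *m U *m adj (v *m U) = v *m adj v.
  by rewrite adjM mulmxA -(mulmxA v U) hU mulmx1.
rewrite hv adjZ -scalemxAl -scalemxAr scalerA => /(congr1 (fun M : 'M[C]_1 => M 0 0)).
rewrite mxE => /eqP; rewrite -subr_eq0 -{2}[(v *m adj v) 0 0]mul1r -mulrBl.
by rewrite mulf_eq0 (negbTE (row_norm_neq0 vnz)) orbF subr_eq0 => /eqP.
Qed.

Lemma arg_exists (l : C) : l * l^* = 1 ->
  exists t : R, - pi < t <= pi /\ l = expi t.
Proof.
case: l => x y; rewrite /= => h.
have h1 : x ^+ 2 + y ^+ 2 = 1.
  by move: h; simpc => -[<- _]; rewrite !expr2.
have hx : -1 <= x <= 1.
  apply/andP; split; nra.
have pi0 : 0 < pi :> R := pi_gt0 R.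
have sa : sin (acos x) = `|y|.
  by rewrite sin_acos // -h1 addrAC subrr add0r sqrtr_sqr.
case: (lerP 0 y) => hy.
  exists (acos x); split.
    apply/andP; split; last exact: acos_lepi.
    by apply: (lt_le_trans _ (acos_ge0 hx)); rewrite oppr_lt0.
  by rewrite /expi acosK ?in_itv //= sa ger0_norm.
exists (- acos x); split.
  apply/andP; split.
    rewrite ltrN2 acos_ltpi //; apply/andP; split; last by case/andP: hx.
    rewrite lt_neqAle; case/andP: hx => -> _; rewrite andbT.
    apply/eqP => ex; move: h1; rewrite -ex; nra.
  by rewrite lerNl (le_trans _ (acos_ge0 hx)) // oppr_le0 ltW.
by rewrite /expi cosN sinN acosK ?in_itv //= sa ltr0_norm // opprK.
Qed.


Definition CS N (U : 'M[C]_N) : set R :=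
  [set `|t| | t in [set t : R | - pi < t <= pi /\ eigenvalue U (expi t)]]%classic.

Lemma costE N (U : 'M[C]_N) : unitary_cost U = sup (CS U).
Proof. by []. Qed.

Lemma CS_ub N (U : 'M[C]_N) x : CS U x -> x <= pi.
Proof.
case=> t [/andP[h1 h2] _] <-.
by case: (lerP 0 t) => ht; [rewrite ger0_norm | rewrite ltr0_norm // lerNl ltW].
Qed.

Lemma CS_has_ub N (U : 'M[C]_N) : has_ubound (CS U).
Proof. by exists pi => x /CS_ub. Qed.

Lemma cost_ge N (U : 'M[C]_N) t : - pi < t <= pi -> eigenvalue U (expi t) ->
  `|t| <= unitary_cost U.
Proof. by move=> h1 h2; rewrite costE; apply: ub_le_sup; [exact: CS_has_ub | exists t]. Qed.

Lemma CS_nonempty N (U : 'M[C]_N) : (0 < N)%N -> U *m adj U = 1%:M -> (CS U !=set0)%classic.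
Proof.
move=> N0 hU; have [l hl] := eigenvalue_closed U N0.
have [t [ht htl]] := arg_exists (eig_unit hU hl).
by rewrite htl in hl; exists `|t|; exists t.
Qed.

Lemma cost_le N (U : 'M[C]_N) y : (0 < N)%N -> U *m adj U = 1%:M ->
  (forall t, - pi < t <= pi -> eigenvalue U (expi t) -> `|t| <= y) ->
  unitary_cost U <= y.
Proof.
move=> N0 hU h; rewrite costE; apply: ge_sup; first exact: CS_nonempty.
by move=> x [t [ht1 ht2] <-]; apply: h.
Qed.

Lemma cost_range N (U : 'M[C]_N) : (0 < N)%N -> U *m adj U = 1%:M ->
  0 <= unitary_cost U <= pi.
Proof.
move=> N0 hU; have [x hx] := CS_nonempty N0 hU.
apply/andP; split.
  apply: le_trans (ub_le_sup (CS_has_ub U) hx).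
  by case: hx => t _ <-.
apply: cost_le => // t ht he; apply: (CS_ub (U := U)); by exists t.
Qed.


Lemma adj_tc m p (A : 'M[C]_(m, p)) : adj A = map_mx Num.conj (A ^T).
Proof. by rewrite /adj map_trmx. Qed.

Lemma Re_add (x y : C) : complex.Re (x + y) = complex.Re x + complex.Re y.
Proof. by case: x; case: y. Qed.

Lemma Re_sum m (F : 'I_m -> C) : complex.Re (\sum_i F i) = \sum_i complex.Re (F i).
Proof.
elim/big_rec2: _ => //= i x y _ <-; exact: Re_add.
Qed.

Lemma Re_mulJ (s w : C) : complex.Re (s * (w^* * w)) = complex.Re s * complex.Re (w^* * w).
Proof. case: s => a b; case: w => x y; simpc => /=. ring. Qed.

Lemma Re_J_ge0 (w : C) : 0 <= complex.Re (w^* * w).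
Proof. case: w => x y; simpc => /=. nra. Qed.

Lemma spec_re N (U : 'M[C]_N) (k : R) : adj U *m U = 1%:M -> U *m adj U = 1%:M ->
  (forall l, eigenvalue U l -> k <= complex.Re l) -> forall p, k <= complex.Re (U p p).
Proof.
move=> hU1 hU2 heig p.
have nU : U \is normalmx by apply/normalmxP; rewrite -!adj_tc hU1 hU2.
move/orthomx_spectralP: nU.
set P := spectralmx U; set sp := spectral_diag U => hUe.
have uP : P *m adj P = 1%:M by rewrite adj_tc; apply/unitarymxP/spectral_unitarymx.
have uP' : adj P *m P = 1%:M by apply: mulmx1C.
have iP : invmx P = adj P by rewrite adj_tc invmx_unitary // spectral_unitarymx.
rewrite iP in hUe.
have eig : forall i, eigenvalue U (sp 0 i).
  move=> i; apply/eigenvalueP; exists (row i P).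
    rewrite -row_mul hUe !mulmxA uP mul1mx mul_diag_mx.
    by apply/rowP => j; rewrite !mxE.
  apply/eqP => h0.
  have : row i (P *m adj P) = 0 by rewrite row_mul h0 mul0mx.
  rewrite uP => /rowP /(_ i); rewrite !mxE eqxx /=.
  by move/eqP; rewrite oner_eq0.
have -> : U p p = \sum_i sp 0 i * ((P i p)^* * P i p).
  rewrite hUe mul_mx_diag mxE; apply: eq_bigr => i _.
  by rewrite mxE /adj !mxE -mulrA mulrCA.
have h1 : \sum_i complex.Re ((P i p)^* * P i p) = 1.
  have := congr1 (fun M : 'M[C]_N => complex.Re (M p p)) uP'.
  rewrite /= !mxE eqxx mulr1n /= Re_sum => <-.
  by apply: eq_bigr => i _; rewrite /adj !mxE.
rewrite Re_sum; under eq_bigr => i _ do rewrite Re_mulJ.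
rewrite -[k]mulr1 -h1 mulr_sumr; apply: ler_sum => i _.
by rewrite ler_wpM2r ?Re_J_ge0 ?heig.
Qed.


Lemma kraus_add n p (L : 'I_p -> 'M[C]_n) A B :
  kraus_channel L (A + B) = kraus_channel L A + kraus_channel L B.
Proof. by rewrite /kraus_channel -big_split; apply: eq_bigr => j _; rewrite mulmxDr mulmxDl. Qed.

Lemma kraus_scale n p (L : 'I_p -> 'M[C]_n) x A :
  kraus_channel L (x *: A) = x *: kraus_channel L A.
Proof. by rewrite /kraus_channel scaler_sumr; apply: eq_bigr => j _; rewrite -scalemxAr -scalemxAl. Qed.

Lemma kraus_opp n p (L : 'I_p -> 'M[C]_n) A :
  kraus_channel L (- A) = - kraus_channel L A.
Proof. by rewrite -scaleN1r kraus_scale scaleN1r. Qed.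

Lemma kraus0 n p (L : 'I_p -> 'M[C]_n) : kraus_channel L 0 = 0.
Proof. by rewrite /kraus_channel big1 // => j _; rewrite mulmx0 mul0mx. Qed.

Lemma outer_entry n (x y : 'cV[C]_n) r s : (x *m adj y) r s = x r 0 * (y s 0)^*.
Proof. by rewrite mxE big_ord1 adjE. Qed.

Lemma polar_key (j jc X Y X' Y' : C) : j * j = -1 -> jc = - j ->
  4%:R^-1 * ((X + Y) * (X' + Y') - (X - Y) * (X' - Y') + j * ((X + j * Y) * (X' + jc * Y'))
   - j * ((X - j * Y) * (X' - jc * Y'))) = X * Y'.
Proof.
move=> hj ->.
have -> : (X + Y) * (X' + Y') - (X - Y) * (X' - Y') + j * ((X + j * Y) * (X' + - j * Y'))
   - j * ((X - j * Y) * (X' - - j * Y')) = 4%:R * X * Y' + (1 + j * j) * (2%:R * Y * X' - 2%:R * X * Y').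
  by ring.
rewrite hj addrN mul0r addr0 -mulrA mulKf //.
by rewrite pnatr_eq0.
Qed.

Definition zz_def n (z : 'cV[C]_n) := z *m adj z.
Fact zz_key : unit. Proof. by []. Qed.
Definition zz n := locked_with zz_key (@zz_def n).
Lemma zzE n (z : 'cV[C]_n) : zz z = z *m adj z.
Proof. by rewrite /zz unlock. Qed.

Lemma zz_entry n (z : 'cV[C]_n) r s : zz z r s = z r 0 * (z s 0)^*.
Proof. by rewrite zzE outer_entry. Qed.

Lemma polar n (x y : 'cV[C]_n) :
  x *m adj y = 4%:R^-1 *: (zz (x + y) - zz (x - y) + 'i *: zz (x + 'i *: y) - 'i *: zz (x - 'i *: y)).
Proof.
apply/matrixP => r s; rewrite outer_entry !mxE !zz_entry !mxE !rmorphD !rmorphN !rmorphM.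
symmetry; apply: polar_key; first by rewrite -expr2 sqr_i.
by apply/eqP; rewrite eq_complex /= oppr0 !eqxx.
Qed.


Section KrausEq.
Variables (n p q : nat) (L : 'I_p -> 'M[C]_n) (L' : 'I_q -> 'M[C]_n).
Hypothesis H : forall rho, density rho -> kraus_channel L rho = kraus_channel L' rho.

Lemma kraus_zz (z : 'cV[C]_n) : kraus_channel L (zz z) = kraus_channel L' (zz z).
Proof.
have [->|znz] := eqVneq z 0; first by rewrite zzE mul0mx !kraus0.
set t := (adj z *m z) 0 0.
have t0 : t != 0 by exact: col_norm_neq0.
have tge0 : 0 <= t by exact: col_norm_ge0.
have -> : zz z = t *: (t^-1 *: zz z) by rewrite scalerA mulfV // scale1r.
rewrite kraus_scale [in RHS]kraus_scale H //; split.
  move=> v; rewrite -scalemxAr -scalemxAl mxE zzE mulmxA -(mulmxA (adj v *m z)).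
  have -> : adj z *m v = adj (adj v *m z) by rewrite adjM adjK.
  rewrite mxE big_ord1 adjE; apply: mulr_ge0; first by rewrite invr_ge0.
  exact: mulcJ_ge0.
rewrite mxtraceZ zzE mxtrace_mulC /mxtrace big_ord1 -/t mulVf //.
Qed.

Lemma col_delta m (A : 'M[C]_m) k r : (A *m (delta_mx k 0 : 'cV[C]_m)) r 0 = A r k.
Proof.
rewrite mxE; under eq_bigr => t _ do rewrite mxE andbT.
exact: sum_hot.
Qed.

Lemma delta_outer (k l : 'I_n) : (delta_mx k l : 'M[C]_n) = (delta_mx k 0 : 'cV[C]_n) *m adj (delta_mx l 0 : 'cV[C]_n).
Proof. by rewrite adj_delta mul_delta_mx. Qed.

Lemma kraus_delta (k l : 'I_n) : kraus_channel L (delta_mx k l) = kraus_channel L' (delta_mx k l).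
Proof.
rewrite delta_outer polar.
by rewrite !(kraus_scale, kraus_add, kraus_opp) !kraus_zz.
Qed.

Lemma trace_entry s (M : 'I_s -> 'M[C]_n) (k l : 'I_n) :
  (kraus_channel M (delta_mx k l)) k l = \sum_j M j k k * (M j l l)^*.
Proof.
rewrite /kraus_channel summxE; apply: eq_bigr => j _.
rewrite delta_outer mulmxA -(mulmxA (M j *m _)) -adjM outer_entry !col_delta.
by [].
Qed.

Lemma trace_sum s (M : 'I_s -> 'M[C]_n) :
  \sum_j \tr (M j) * (\tr (M j))^* = \sum_k \sum_l (kraus_channel M (delta_mx k l)) k l.
Proof.
under [RHS]eq_bigr => k _ do under eq_bigr => l _ do rewrite trace_entry.
under [RHS]eq_bigr => k _ do rewrite exchange_big /=.
rewrite exchange_big /=; apply: eq_bigr => j _.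
rewrite /mxtrace rmorph_sum mulr_suml; apply: eq_bigr => k _.
by rewrite mulr_sumr.
Qed.

Lemma trace_id : \sum_j \tr (L j) * (\tr (L j))^* = \sum_j \tr (L' j) * (\tr (L' j))^*.
Proof.
rewrite !trace_sum; apply: eq_bigr => k _; apply: eq_bigr => l _.
by rewrite kraus_delta.
Qed.
End KrausEq.

End Basic.

Section Main.
Variable R : realType.
Local Notation C := R[i].
Variables (d n : nat) (K : 'I_d.+1 -> 'M[C]_n.+1) (alpha : C).
Hypotheses (hsum : \sum_(j < d.+1) adj (K j) *m K j = 1%:M)
  (hK0 : K ord0 = alpha%:M)
  (htr : forall j : 'I_d.+1, j != ord0 -> \tr (K j) = 0).

Let nc := Normc.normc alpha.
Let c : C := nc%:C.

Lemma nc_ge0 : 0 <= nc.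
Proof. by rewrite /nc; case: alpha => a b /=; apply: sqrtr_ge0. Qed.

Lemma cc : alpha * alpha^* = c * c.
Proof.
by rewrite -sqr_normc -expr2; congr (_ ^+ 2).
Qed.

Lemma cJ : c^* = c.
Proof. by rewrite /c conjc_real. Qed.

Definition Kt (j : 'I_d.+1) : 'M[C]_n.+1 := if j == ord0 then 0 else K j.

Lemma hsumt : \sum_j adj (Kt j) *m Kt j = (1 - c * c)%:M.
Proof.
move: hsum; rewrite (bigD1 ord0) //= hK0 adj_scalar -scalar_mxM.
rewrite mulrC cc => /(congr1 (fun M => M - (c * c)%:M)).
rewrite addrAC subrr add0r raddfB /= => <-.
rewrite (bigD1 ord0) //= /Kt eqxx adj0 mul0mx add0r.
by apply: eq_bigr => j /negbTE ->.
Qed.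

Lemma nc_le1 : nc <= 1.
Proof.
have h : 0 <= 1 - c * c.
  have := congr1 (fun M : 'M[C]_n.+1 => M 0 0) hsumt; rewrite /= mxE eqxx mulr1n => <-.
  rewrite summxE; apply: sumr_ge0 => j _; rewrite mxE; apply: sumr_ge0 => r _.
  by rewrite adjE mulrC mulcJ_ge0.
have : nc * nc <= 1.
  by move: h; rewrite subr_ge0 /c -rmorphM lecR.
have := nc_ge0; nra.
Qed.


Lemma nc_itv : -1 <= nc <= 1.
Proof. by apply/andP; split; [apply: le_trans nc_ge0; rewrite lerN10 | exact: nc_le1]. Qed.

Lemma fin_contra (x y q k Nr : R) : 0 <= q -> 0 < Nr -> q < k -> k * Nr <= x ->
  x ^+ 2 + y ^+ 2 <= q * q * (Nr * Nr) -> False.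
Proof.
move=> h1 h2 h3 h4 h5.
have h6 : q * Nr < x by apply: lt_le_trans h4; rewrite ltr_pM2r.
have h7 : 0 <= q * Nr by rewrite mulr_ge0 // ltW.
have h8 : (q * Nr) ^+ 2 < x ^+ 2 by nra.
have h9 : 0 <= y ^+ 2 by rewrite sqr_ge0.
have e : q * q * (Nr * Nr) = (q * Nr) ^+ 2 by rewrite expr2 mulrACA.
rewrite e in h5; lra.
Qed.

Lemma lower m (U : 'M[C]_(m.+1 * n.+1)) :
  implements (kraus_channel K) U -> acos nc <= unitary_cost U.
Proof.
case=> [[hU1 hU2] himp].
have hN : (0 < m.+1 * n.+1)%N by rewrite muln_gt0.
have hkr : forall rho, density rho -> kraus_channel K rho = kraus_channel (Kp U) rho.
  by move=> rho hr; rewrite himp // ptrace_Kp.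
have tid := trace_id hkr.
set z := \tr (Kp U ord0).
have [x [y ez]] : exists x y, z = x +i* y by case: (z) => x y; exists x, y.
have hz : x ^+ 2 + y ^+ 2 <= (nc * nc) * (n.+1 * n.+1)%:R.
  have h1 : z * z^* <= \sum_j \tr (Kp U j) * (\tr (Kp U j))^*.
    rewrite (bigD1 ord0) //= lerDl; apply: sumr_ge0 => j _; exact: mulcJ_ge0.
  rewrite -tid (bigD1 ord0) //= big1 ?addr0 in h1; last first.
    by move=> j /htr ->; rewrite mul0r.
  rewrite hK0 mxtrace_scalar rmorphMn mulrnAl mulrnAr -mulrnA cc in h1.
  rewrite /c -rmorphM -rmorphMn ez in h1.
  move: h1; simpc => /andP[_ h1].
  by rewrite !expr2 mulr_natr.
rewrite leNgt; apply/negP => hlt.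
have /andP[cg0 cpi] := cost_range hN hU2.
have [/andP[a0 api] cac] := acos_def nc_itv.
set th := unitary_cost U in hlt cg0 cpi.
have hk : forall l, eigenvalue U l -> cos th <= complex.Re l.
  move=> l hl; have [t [ht htl]] := arg_exists (eig_unit hU2 hl).
  rewrite htl in hl; have ht2 := cost_ge ht hl.
  rewrite htl /expi /= -(cos_norm t) leNgt ltr_cos ?in_itv /= ?cg0 ?cpi ?normr_ge0 //.
    by rewrite -leNgt.
  by rewrite (le_trans ht2 cpi).
have hp := spec_re hU1 hU2 hk.
have hre : cos th *+ n.+1 <= x.
  have -> : x = complex.Re z by rewrite ez.
  have -> : cos th *+ n.+1 = \sum_(i < n.+1) cos th by rewrite sumr_const card_ord.
  rewrite /z /mxtrace Re_sum; apply: ler_sum => i _.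
  by rewrite mxE; apply: hp.
have hkn : nc < cos th.
  by rewrite -{1}cac ltr_cos ?in_itv /= ?a0 ?api ?cg0 ?cpi.
have hn0 : (0 : R) < n.+1%:R by rewrite ltr0n.
move: hz; rewrite natrM => hz.
rewrite -mulr_natr in hre.
exact: (fin_contra nc_ge0 hn0 hkn hre hz).
Qed.


Lemma trig_part (t : R) :
  (expi t - 1) * (expi t * expi t - (c *+ 2) * expi t + 1) = 0 -> nc <= cos t.
Proof.
move/eqP; rewrite mulf_eq0 => /orP[|].
  rewrite subr_eq0 /expi => /eqP [-> _]; exact: nc_le1.
rewrite /expi /c; simpc; rewrite eq_complex /= => /andP[/eqP h1 /eqP h2].
have h3 := cos2Dsin2 t.
set co := cos t in h1 h2 h3 *; set si := sin t in h1 h2 h3.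
have r1 : co * (co - nc) = 0.
  have -> : co * (co - nc) = (co * co - si * si - (nc + nc) * co + 1 - (1 - (co ^+ 2 + si ^+ 2))) / 2%:R.
    by field.
  by rewrite h1 h3 subrr subr0 mul0r.
have r2 : si * (co - nc) = 0.
  have -> : si * (co - nc) = (co * si + si * co - (nc + nc) * si) / 2%:R by field.
  by rewrite h2 mul0r.
have : co - nc = co * (co * (co - nc)) + si * (si * (co - nc)).
  by rewrite !mulrA -!expr2 -mulrDl h3 mul1r.
by rewrite r1 r2 !mulr0 addr0 => /eqP; rewrite subr_eq0 => /eqP ->.
Qed.


Local Notation N := (d.+1 * n.+1)%N.
Let P : 'M[C]_N := @Pm R d n.+1.
Let T : 'M[C]_N := Vof Kt.
Let Ts : 'M[C]_N := adj T.
Let s2 : C := 1 - c * c.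

Lemma hPP : P *m P = P.
Proof. by rewrite /P /Pm tensmx_mul mul_delta_mx mul1mx. Qed.

Lemma hPT : P *m T = 0.
Proof.
rewrite /T /Vof mulmx_sumr big1 // => j _.
rewrite /P /Pm tensmx_mul mul1mx.
have [->|hj] := eqVneq j ord0; first by rewrite /Kt eqxx tensmx0.
by rewrite mul_delta_mx_0 ?tens0mx // eq_sym.
Qed.

Lemma hTP : T *m P = T.
Proof.
rewrite /T /Vof mulmx_suml; apply: eq_bigr => j _.
by rewrite /P /Pm tensmx_mul mul_delta_mx mulmx1.
Qed.

Lemma hTsP : Ts *m P = 0.
Proof.
rewrite /Ts /T adj_Vof mulmx_suml big1 // => j _.
rewrite /P /Pm tensmx_mul mulmx1.
have [->|hj] := eqVneq j ord0; first by rewrite /Kt eqxx adj0 tensmx0.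
by rewrite mul_delta_mx_0 ?tens0mx.
Qed.

Lemma hPTs : P *m Ts = Ts.
Proof.
rewrite /Ts /T adj_Vof mulmx_sumr; apply: eq_bigr => j _.
by rewrite /P /Pm tensmx_mul mul_delta_mx mul1mx.
Qed.

Lemma hTsT : Ts *m T = s2 *: P.
Proof.
rewrite /Ts /T adj_Vof /Vof mulmx_suml.
transitivity (\sum_b (delta_mx 0 0 : 'M[C]_d.+1) *t (adj (Kt b) *m Kt b)).
  apply: eq_bigr => b _; rewrite mulmx_sumr (bigD1 b) //= tensmx_mul mul_delta_mx.
  rewrite big1 ?addr0 // => j hj; rewrite tensmx_mul mul_delta_mx_0 ?tens0mx //.
  by rewrite eq_sym.
by rewrite -tensmx_sumr hsumt -scalemx1 tensmxZr.
Qed.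

Lemma hc : 1 + c != 0.
Proof.
have -> : 1 + c = (1 + nc)%:C by rewrite rmorphD rmorph1.
rewrite lt0r_neq0 // ltcR; have := nc_ge0; lra.
Qed.

Lemma hs2 : s2 = 1 - c ^+ 2.
Proof. by rewrite expr2. Qed.

Lemma adj_form k (a b : C) (P0 G T0 Ts0 : 'M[C]_k) : Num.conj a = a -> Num.conj b = b ->
  adj (1%:M - a *: P0 - b *: G + T0 - Ts0) =
  1%:M - a *: adj P0 - b *: adj G + adj T0 - adj Ts0.
Proof. by move=> ha hb; rewrite adjB adjD adjB adjB adj1 !adjZ ha hb. Qed.

Lemma e4 : Num.conj (1 - c) = 1 - c.
Proof.
have -> : 1 - c = (1 - nc)%:C by rewrite rmorphB rmorph1.
exact: conjc_real.
Qed.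

Lemma e5 : Num.conj ((1 + c)^-1) = (1 + c)^-1.
Proof.
have -> : (1 + c)^-1 = ((1 + nc)^-1)%:C by rewrite fmorphV rmorphD rmorph1.
exact: conjc_real.
Qed.

Section Constr.
Variables (P0 T0 Ts0 : 'M[C]_N).
Hypotheses (hPP0 : P0 *m P0 = P0) (hPT0 : P0 *m T0 = 0) (hTP0 : T0 *m P0 = T0)
  (hTsP0 : Ts0 *m P0 = 0) (hPTs0 : P0 *m Ts0 = Ts0) (hTsT0 : Ts0 *m T0 = s2 *: P0)
  (hadjP0 : adj P0 = P0) (hTs0 : adj T0 = Ts0).

Lemma rPP : P0 * P0 = P0. Proof. exact: hPP0. Qed.
Lemma rPT : P0 * T0 = 0. Proof. exact: hPT0. Qed.
Lemma rTP : T0 * P0 = T0. Proof. exact: hTP0. Qed.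
Lemma rTsP : Ts0 * P0 = 0. Proof. exact: hTsP0. Qed.
Lemma rPTs : P0 * Ts0 = Ts0. Proof. exact: hPTs0. Qed.
Lemma rTsT : Ts0 * T0 = s2 *: P0. Proof. exact: hTsT0. Qed.

Definition W0 : 'M[C]_N := Wm P0 T0 Ts0 c.

Lemma WW' : Wm' P0 T0 Ts0 c * W0 = 1.
Proof. exact: (Wm'Wm rPP rTsT rPT rTP rTsP rPTs hc hs2). Qed.

Lemma W'W : W0 * Wm' P0 T0 Ts0 c = 1.
Proof. exact: (WmWm' rPP rTsT rPT rTP rTsP rPTs hc hs2). Qed.

Lemma WP0 : W0 *m P0 = c *: P0 + T0.
Proof. exact: (WmP rPP rTsT rPT rTP rTsP rPTs hc hs2). Qed.

Lemma Wpoly : (W0 - 1) * (W0 * W0 - (c *+ 2) *: W0 + 1) = 0.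
Proof. exact: (Wm_poly rPP rTsT rPT rTP rTsP rPTs hc hs2). Qed.

Lemma adjW : adj W0 = Wm' P0 T0 Ts0 c.
Proof.
rewrite /W0 /Wm /Wm' adj_form; last first.
- exact: e5.
- exact: e4.
have e1 : adj (T0 *m Ts0) = T0 *m Ts0 by rewrite adjM -hTs0 adjK.
have e3 : adj Ts0 = T0 by rewrite -hTs0 adjK.
by rewrite e1 e3 hadjP0 hTs0.
Qed.

Lemma eig_poly (X : 'M[C]_N) (v : 'rV[C]_N) l : v *m X = l *: v ->
  v *m ((X - 1) * (X * X - (c *+ 2) *: X + 1)) =
  ((l - 1) * (l * l - (c *+ 2) * l + 1)) *: v.
Proof.
move=> hv.
have h1 : v *m (X - 1) = (l - 1) *: v by rewrite mulmxBr mulmx1 hv scalerBl scale1r.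
have h2 : v *m (X * X - (c *+ 2) *: X + 1) = (l * l - (c *+ 2) * l + 1) *: v.
  rewrite mulmxDr mulmxBr mulmx1 -scalemxAr.
  have -> : v *m (X * X) = (l * l) *: v.
    by rewrite [X * X]/(X *m X) mulmxA hv -scalemxAl hv scalerA.
  by rewrite hv scalerA scalerDl scalerBl scale1r.
by rewrite [_ * _]/(_ *m _) mulmxA h1 -scalemxAl h2 scalerA.
Qed.

Lemma W_unitary : unitary W0.
Proof. by rewrite /unitary adjW; split; [exact: WW' | exact: W'W]. Qed.

Lemma cost_W0 : unitary_cost W0 <= acos nc.
Proof.
have hN : (0 < N)%N by rewrite muln_gt0.
have [_ hW2] := W_unitary.
apply: cost_le => // t ht /eigenvalueP [v hv vnz].
have := eig_poly hv; rewrite Wpoly mulmx0 => /esym /eqP.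
rewrite scalemx_eq0 (negbTE vnz) orbF => /eqP /trig_part hc0.
have [/andP[a0 api] cac] := acos_def nc_itv.
rewrite leNgt; apply/negP => hlt.
have tpi : `|t| <= pi.
  case/andP: ht => h1 h2.
  by case: (lerP 0 t) => h0; [rewrite ger0_norm | rewrite ltr0_norm // lerNl ltW].
have : cos `|t| < cos (acos nc).
  by rewrite ltr_cos ?in_itv /= ?normr_ge0 ?a0 ?api ?tpi.
by rewrite cos_norm cac ltNge hc0.
Qed.

End Constr.


Definition L (b : 'I_d.+1) : 'M[C]_n.+1 := if b == ord0 then c%:M else K b.

Lemma WPV : c *: P + T = Vof L.
Proof.
rewrite /T /Vof /P /Pm (bigD1 ord0) //= [in RHS](bigD1 ord0) //= /L /Kt eqxx tensmx0 add0r.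
rewrite -tensmxZr scalemx1; congr (_ + _); apply: eq_bigr => b /negbTE ->.
by [].
Qed.

Lemma cJ' : Num.conj c = c. Proof. exact: cJ. Qed.
Lemma cc' : Num.conj alpha * alpha = c * c. Proof. rewrite mulrC; exact: cc. Qed.

Lemma kraus_L rho : kraus_channel L rho = kraus_channel K rho.
Proof.
rewrite /kraus_channel (bigD1 ord0) //= [RHS](bigD1 ord0) //= /L eqxx hK0.
congr (_ + _); last by apply: eq_bigr => b /negbTE ->.
rewrite !adj_scalar !mul_mx_scalar !mul_scalar_mx !scalerA.
by rewrite cJ' cc'.
Qed.

Lemma ptrace_XP m (X : 'M[C]_(m.+1 * n.+1)) rho :
  ptraceB (X *m ((delta_mx 0 0 : 'M[C]_m.+1) *t rho) *m adj X) =
  ptraceB ((X *m Pm R m n.+1) *m ((delta_mx 0 0 : 'M[C]_m.+1) *t rho) *m adj (X *m Pm R m n.+1)).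
Proof. by rewrite ptrace_Kp mulPmV ptrace_Vof. Qed.

Lemma upper : exists U : 'M[C]_(d.+1 * n.+1),
  implements (kraus_channel K) U /\ unitary_cost U <= acos nc.
Proof.
have hadj : adj P = P by exact: adjPm.
exists (W0 P T Ts); split; last first.
  exact: (cost_W0 hPP hPT hTP hTsP hPTs hTsT hadj erefl).
split; first exact: (W_unitary hPP hPT hTP hTsP hPTs hTsT hadj erefl).
move=> rho _; rewrite ptrace_XP.
rewrite (WP0 hPP hPT hTP hTsP hPTs hTsT) WPV ptrace_Vof.
by rewrite -kraus_L.
Qed.

Theorem main_sec : channel_cost (kraus_channel K) = acos nc.
Proof.
rewrite /channel_cost.
set S := (X in inf X).
have [U [hU hcU]] := upper.
have hS : S (unitary_cost U) by exists d, U.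
have lb : lbound S (acos nc) by move=> x [m [V [hV ->]]]; exact: lower hV.
apply/le_anti/andP; split.
  by apply: le_trans (ge_inf _ hS) hcU; exists (acos nc).
by apply: lb_le_inf; [exists (unitary_cost U) | exact: lb].
Qed.

End Main.

Unset Implicit Arguments.

Theorem theorem3 (R : realType) (n d : nat) (K : 'I_d.+1 -> 'M[R[i]]_n)
  (alpha : R[i]) :
  (0 < n)%N ->
  \sum_(j < d.+1) adj (K j) *m K j = 1%:M ->
  K ord0 = alpha%:M ->
  (forall j : 'I_d.+1, j != ord0 -> \tr (K j) = 0) ->
  channel_cost (kraus_channel K) = acos (Normc.normc alpha).
Proof.
case: n K => [//|n] K _ hsum hK0 htr.
exact: (main_sec hsum hK0 htr).
Qed.
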